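(* For every quotient-convergent sequence $(\varphi_n\colon n\in\mathbb{N})$ of finite setfunctions there is a setfunction $\varphi$ on the algebra $\mathcal{H}$ of clopen subsets of the Cantor set such that $\varphi_n\rightarrowtail\varphi$.
   Context: A setfunction on a set-algebra $(J,\mathcal{B})$ is a map $\varphi\colon\mathcal{B}\to\mathbb{R}$ with $\varphi(\emptyset)=0$; it is finite if $J$ is finite and $\mathcal{B}=2^J$. For $k\in\mathbb{N}$ and a map $F\colon J\to[k]$ with $F^{-1}(i)\in\mathcal{B}$ for all $i$, the quotient $\varphi\circ F^{-1}$ is $A\mapsto\varphi(F^{-1}(A))$ on $2^{[k]}$; $Q_k(\varphi)\subseteq\mathbb{R}^{2^k}$ is the set of all quotients of $\varphi$ on $[k]$. A sequence $(\varphi_n)$ is quotient-convergent if for every $k$ the sets $Q_k(\varphi_n)$ form a Cauchy sequence in the Hausdorff distance on $\mathbb{R}^{2^k}$; $\varphi_n\rightarrowtail\varphi$ means that for every $k$ the Hausdorff distance between $Q_k(\varphi_n)$ and $Q_k(\varphi)$ tends to $0$. *)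

(* Defs.v *)
From HB Require Import structures.
From mathcomp Require Import all_boot all_order all_algebra.
From mathcomp Require Import all_classical all_reals all_analysis.
Set Implicit Arguments. Unset Strict Implicit. Unset Printing Implicit Defensive.
Import Order.TTheory GRing.Theory Num.Theory.
Local Open Scope classical_set_scope.
Local Open Scope ring_scope.

(* A setfunction on a set-algebra (J, B): phi : set J -> R, where only the
   values on sets satisfying B matter, with phi set0 = 0. *)
Definition is_setfunction (R : realType) (J : Type) (phi : set J -> R) : Prop :=
  phi set0 = 0.

Definition vec (R : realType) (k : nat) := {set 'I_k} -> R.

Definition quotient_of (R : realType) (J : Type) (phi : set J -> R) (k : nat)
  (F : J -> 'I_k) : vec R k :=
  fun A => phi (F @^-1` [set i | i \in A]).

Definition Qk (R : realType) (J : Type) (B : set J -> Prop) (phi : set J -> R)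
  (k : nat) : set (vec R k) :=
  [set v | exists F : J -> 'I_k,
      (forall i : 'I_k, B (F @^-1` [set i])) /\ v = quotient_of phi F].

Definition vdist_le (R : realType) (k : nat) (v w : vec R k) (e : R) : Prop :=
  forall A : {set 'I_k}, `|v A - w A| <= e.

Definition hausdorff_le (R : realType) (k : nat) (X Y : set (vec R k)) (e : R)
  : Prop :=
  (forall v, X v -> exists2 w, Y w & vdist_le v w e) /\
  (forall w, Y w -> exists2 v, X v & vdist_le v w e).

Definition hausdorff_cauchy (R : realType) (k : nat) (X : nat -> set (vec R k))
  : Prop :=
  forall e : R, 0 < e -> exists N : nat, forall m n : nat,
    (N <= m)%N -> (N <= n)%N -> hausdorff_le (X m) (X n) e.

Definition hausdorff_cvg (R : realType) (k : nat) (X : nat -> set (vec R k))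
  (Y : set (vec R k)) : Prop :=
  forall e : R, 0 < e -> exists N : nat, forall n : nat,
    (N <= n)%N -> hausdorff_le (X n) Y e.

(* Finite setfunctions: J a finite type, B = 2^J. *)
Definition all_sets (J : Type) : set J -> Prop := fun _ => True.

Definition quotient_convergent (R : realType) (J : nat -> finType)
  (phi : forall n, set (J n) -> R) : Prop :=
  forall k : nat, (0 < k)%N -> @hausdorff_cauchy R k (fun n => @Qk R (J n) (@all_sets (J n)) (phi n) k).

Definition quotient_converges_to (R : realType) (J : nat -> finType)
  (phi : forall n, set (J n) -> R) (T : Type) (B : set T -> Prop)
  (psi : set T -> R) : Prop :=
  forall k : nat, (0 < k)%N -> @hausdorff_cvg R k (fun n => @Qk R (J n) (@all_sets (J n)) (phi n) k)
                                (@Qk R T B psi k).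

(* Main.v *)
Require Import Defs.
From HB Require Import structures.
From mathcomp Require Import all_boot all_order all_algebra.
From mathcomp Require Import all_classical all_reals all_analysis.
From mathcomp Require Import lra zify.
Set Implicit Arguments. Unset Strict Implicit. Unset Printing Implicit Defensive.
Import Order.TTheory GRing.Theory Num.Theory.
Import numFieldTopology.Exports.
Local Open Scope classical_set_scope.

Definition pdn d (x : cantor_space) : nat := \sum_(i < d) x i * 2 ^ i.

Lemma pdnS d x : pdn d.+1 x = pdn d x + x d * 2 ^ d.
Proof. by rewrite /pdn big_ord_recr. Qed.

Lemma pdn_lt d x : pdn d x < 2 ^ d.
Proof.
elim: d => [|d IH]; first by rewrite /pdn big_ord0.
rewrite pdnS expnS; move: IH; case: (x d); rewrite ?mul1n ?mul0n; lia.
Qed.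

Definition pd d x : 'I_(2 ^ d) := Ordinal (pdn_lt d x).

Lemma pdn_prefix d x y : (forall i, i < d -> x i = y i) -> pdn d x = pdn d y.
Proof. by move=> h; apply: eq_bigr => i _; rewrite h. Qed.

Lemma pdn_mod d d' x : d <= d' -> pdn d' x %% 2 ^ d = pdn d x.
Proof.
move=> /subnK <-; elim: (d' - d) => [|n IH].
  by rewrite add0n modn_small // pdn_lt.
rewrite addSn pdnS -modnDml IH.
have /dvdnP [q ->] : 2 ^ d %| x (n + d) * 2 ^ (n + d).
  by apply: dvdn_mull; rewrite expnD dvdn_mull.
by rewrite addnC modnMDl ?modn_small // pdn_lt.
Qed.

Lemma pdn_inj d x y : pdn d x = pdn d y -> forall i, i < d -> x i = y i.
Proof.
elim: d => [|d IH] h i hi //.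
have hx := pdn_lt d x; have hy := pdn_lt d y; rewrite !pdnS in h.
have hd : x d = y d.
  by move: h; case: (x d); case: (y d); rewrite ?mul1n ?mul0n //; lia.
rewrite hd in h; have h' : pdn d x = pdn d y by lia.
rewrite ltnS leq_eqVlt in hi; case/orP: hi => [/eqP -> //| hi]; exact: IH.
Qed.

Lemma pdn_surj d r : r < 2 ^ d -> exists x : cantor_space, pdn d x = r.
Proof.
elim: d r => [|d IH] r hr.
  by exists (fun _ => false); rewrite /pdn big_ord0; move: hr; rewrite expn0; lia.
have [x0 hx0] := IH (r %% 2 ^ d) (ltn_pmod _ (expn_gt0 2 d)).
exists (fun i => if i == d then r %/ 2 ^ d == 1 else x0 i).
rewrite pdnS eqxx (@pdn_prefix _ _ x0); last first.
  by move=> i hi; rewrite ifN // ltn_eqF.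
rewrite hx0.
have hq : r %/ 2 ^ d < 2 by rewrite ltn_divLR ?expn_gt0 //; move: hr; rewrite expnS; lia.
move: (divn_eq r (2 ^ d)) hq; case: (r %/ 2 ^ d) => [|[|q]] //=; rewrite ?mul0n ?mul1n; lia.
Qed.

Definition pre d (x : cantor_space) : set cantor_space := [set y | forall i, i < d -> y i = x i].

Lemma pre_nbhs d x : nbhs x (pre d x).
Proof.
have := @filter_forall cantor_space 'I_d (fun i (y : cantor_space) => y i = x i) (nbhs x) _.
have sub : (fun y : cantor_space => forall i : 'I_d, y i = x i) `<=` pre d x.
  by move=> y hy i hi; exact: (hy (Ordinal hi)).
move=> h; apply: (@filterS _ (nbhs x) _ _ _ sub); apply: h => i.
have hb : nbhs (x i : bool) [set x i] by [].
have h1 := @proj_continuous nat (fun _ : nat => bool) (nat_of_ord i) x _ hb.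
have sub2 : proj (nat_of_ord i) @^-1` [set x i] `<=` (fun y : cantor_space => y i = x i) by [].
exact: (@filterS _ (nbhs x) _ _ _ sub2 h1).
Qed.

Lemma nbhs_pre x (U : set cantor_space) : nbhs x U -> exists d, pre d x `<=` U.
Proof.
move=> hU; apply/not_existsP => hn.
have hy d : exists y, pre d x y /\ ~ U y.
  have := hn d; move/existsNP => [y /not_implyP [h1 h2]]; by exists y.
pose ys d := proj1_sig (cid (hy d)).
have hys d : pre d x (ys d) /\ ~ U (ys d) := proj2_sig (cid (hy d)).
have gcvg : ys @ \oo --> x.
  apply/cvg_sup => N V [W] [[Z] oZ <-] WxN WV.
  apply: (filterS WV); rewrite nbhs_simpl; exists N.+1 => // i /= hi.
  by rewrite (proj1 (hys i) N hi).
move/(_ U hU): gcvg; rewrite nbhs_simpl => -[M _ hM].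
exact: (proj2 (hys M)) (hM M (leqnn M)).
Qed.

Lemma unif_depth k (F : cantor_space -> 'I_k) :
  (forall i, open (F @^-1` [set i])) -> exists D, forall x y, pre D x y -> F y = F x.
Proof.
move=> hF; apply/not_existsP => hn.
have hxy D : exists p : cantor_space * cantor_space, pre D p.1 p.2 /\ F p.2 <> F p.1.
  have := hn D; move/existsNP => [x /existsNP [y /not_implyP [h1 h2]]].
  by exists (x, y).
pose ps D := proj1_sig (cid (hxy D)).
have hps D : pre D (ps D).1 (ps D).2 /\ F (ps D).2 <> F (ps D).1 := proj2_sig (cid (hxy D)).
pose xs D := (ps D).1.
have [z [_ hz]] := @cantor_space_compact (xs @ \oo) _ filterT.
have hU : nbhs z (F @^-1` [set F z]) by apply: open_nbhs_nbhs; split => //; exact: hF.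
have [n hn'] := nbhs_pre hU.
have hA : (xs @ \oo) [set xs D | D in [set D | (n <= D)%N]].
  by exists n => // D /= hD; exists D.
have [v [[D /= hD <-] hv]] := hz _ _ hA (pre_nbhs n z).
have h1 : F (xs D) = F z by apply: hn'.
have h2 : F (ps D).2 = F z.
  apply: hn' => i hi; rewrite -(hv i hi) /xs.
  by apply: (proj1 (hps D)); apply: leq_trans hi hD.
by apply: (proj2 (hps D)); rewrite h2 -h1.
Qed.

Definition cyl d (T : {set 'I_(2 ^ d)}) : set cantor_space := [set x | pd d x \in T].

Lemma pd_prefix d x y : pre d x y -> pd d y = pd d x.
Proof. by move=> h; apply: val_inj; apply: pdn_prefix. Qed.

Lemma cyl_open d (T : {set 'I_(2 ^ d)}) : open (cyl T).
Proof.
rewrite openE => x hx.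
have sub : pre d x `<=` cyl T by move=> y hy; rewrite /cyl /= (pd_prefix hy).
exact: (@filterS _ (nbhs x) _ _ _ sub (pre_nbhs d x)).
Qed.

Lemma cyl_clopen d (T : {set 'I_(2 ^ d)}) : clopen (cyl T).
Proof.
split; first exact: cyl_open.
have -> : cyl T = ~` cyl (~: T).
  apply/seteqP; split => x /=; rewrite /cyl /= inE; case: (pd d x \in T) => //=.
by rewrite closedC; exact: cyl_open.
Qed.

Local Open Scope ring_scope.

Section Basics.
Variable R : realType.

Lemma vdist_refl k (v : vec R k) e : 0 <= e -> vdist_le v v e.
Proof. by move=> e0 A; rewrite subrr normr0. Qed.

Lemma vdist_sym k (v w : vec R k) e : vdist_le v w e -> vdist_le w v e.
Proof. by move=> h A; rewrite distrC. Qed.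

Lemma vdist_trans k (u v w : vec R k) e1 e2 :
  vdist_le u v e1 -> vdist_le v w e2 -> vdist_le u w (e1 + e2).
Proof.
move=> h1 h2 A; apply: le_trans (ler_distD (v A) _ _) _.
by apply: lerD; [apply: h1 | exact: h2].
Qed.

Lemma vdist_mono k (v w : vec R k) e1 e2 :
  e1 <= e2 -> vdist_le v w e1 -> vdist_le v w e2.
Proof. by move=> le h A; apply: le_trans (h A) le. Qed.

Lemma vdist_eq k (v w : vec R k) :
  (forall e, 0 < e -> vdist_le v w e) -> v = w.
Proof.
move=> h; apply/funext => A; apply/eqP; rewrite -subr_eq0 -normr_eq0.
apply/negPn/negP => hne.
have hp : 0 < `|v A - w A| by rewrite lt_def hne normr_ge0.
have := h _ (divr_gt0 hp (ltr0Sn R 1)) A.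
rewrite ler_pdivlMr ?ltr0Sn // => hle.
move: hp hle; set a := `|_|; move=> hp hle; lra.
Qed.

Definition Qmap m k (g : 'I_m -> 'I_k) (v : vec R m) : vec R k :=
  fun A => v (finset (fun i => g i \in A)).

Lemma QmapC m k l (f : 'I_m -> 'I_k) (g : 'I_k -> 'I_l) v :
  Qmap g (Qmap f v) = Qmap (g \o f) v.
Proof.
apply/funext => A; rewrite /Qmap; congr (v _); apply/setP => i.
by rewrite !inE.
Qed.

Lemma Qmap_vdist m k (g : 'I_m -> 'I_k) v w e :
  vdist_le v w e -> vdist_le (Qmap g v) (Qmap g w) e.
Proof. by move=> h A; apply: h. Qed.

Definition vd k (v w : vec R k) : R := \sum_A `|v A - w A|.

Lemma vd_ge k (v w : vec R k) : vdist_le v w (vd v w).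
Proof.
move=> A; rewrite /vd (bigD1 A) //= lerDl; apply: sumr_ge0 => *.
exact: normr_ge0.
Qed.

Lemma vd_le k (v w : vec R k) e :
  vdist_le v w e -> vd v w <= e *+ #|{: {set 'I_k}}|.
Proof.
move=> h; rewrite /vd -sumr_const; apply: ler_sum => A _; exact: h.
Qed.

End Basics.

Section Main.
Local Unset Implicit Arguments.
Variables (R : realType) (J : nat -> finType) (phi : forall n, set (J n) -> R).
Hypothesis phi0 : forall n, phi n set0 = 0.
Hypothesis qc : quotient_convergent phi.
Local Set Implicit Arguments.

Definition quot n k (F : J n -> 'I_k) : vec R k := quotient_of (phi n) F.

Lemma quotE n k (F : J n -> 'I_k) A : quot F A = phi n (fun x => F x \in A).
Proof. by []. Qed.

Lemma quot_ext n k (F G : J n -> 'I_k) : F =1 G -> quot F = quot G.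
Proof. by move=> h; apply/funext => A; rewrite !quotE; congr (phi n _); apply/funext => x; rewrite h. Qed.

Lemma quot_comp n m k (g : 'I_m -> 'I_k) (F : J n -> 'I_m) :
  quot (g \o F) = Qmap g (quot F).
Proof.
apply/funext => A; rewrite /Qmap !quotE; congr (phi n _); apply/funext => x.
by rewrite /= inE.
Qed.

Lemma QkP n k v : @Qk R (J n) (@all_sets (J n)) (phi n) k v <-> exists F : J n -> 'I_k, v = quot F.
Proof. by split=> [[F [_ ->]]|[F ->]]; exists F. Qed.

Lemma cstep k : (0 < k)%N -> forall e, 0 < e -> exists N, forall m n, (N <= m)%N -> (N <= n)%N ->
  forall F : J m -> 'I_k, exists G : J n -> 'I_k, vdist_le (quot F) (quot G) e.
Proof.
move=> hk e he; have [N hN] := qc k hk e he; exists N => m n hm hn F.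
have [h1 _] := hN _ _ hm hn.
have [|w /QkP [G ->] hw] := h1 (quot F); first by apply/QkP; exists F.
by exists G.
Qed.

Definition L k : set (vec R k) := [set x | forall e, 0 < e -> exists N, forall n, (N <= n)%N ->
  exists F : J n -> 'I_k, vdist_le (quot F) x e].

Lemma LQmap m k (g : 'I_m -> 'I_k) x : L x -> L (Qmap g x).
Proof.
move=> hx e he; have [N hN] := hx e he; exists N => n hn.
have [F hF] := hN n hn; exists (g \o F); rewrite quot_comp; exact: Qmap_vdist.
Qed.

Lemma quot_bound k : (0 < k)%N -> exists N B, forall n, (N <= n)%N ->
  forall (F : J n -> 'I_k) A, `|quot F A| <= B.
Proof.
move=> hk; have [N hN] := cstep hk ltr01; exists N.
exists (\sum_(S : {set J N}) `|phi N (fun x => x \in S)| + 1) => n hn F A.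
have [G hG] := hN n N hn (leqnn _) F.
have h1 : `|quot G A| <= \sum_(S : {set J N}) `|phi N (fun x => x \in S)|.
  have -> : quot G A = phi N (fun x => x \in finset (fun x => G x \in A)).
    by rewrite quotE; congr (phi N _); apply/funext => x; rewrite inE.
  rewrite (bigD1 (finset (fun x => G x \in A))) //=.
  by rewrite lerDl; apply: sumr_ge0 => *; exact: normr_ge0.
have h2 := hG A.
have h3 := ler_distD (quot G A) (quot F A) 0.
rewrite !subr0 in h3.
move: h1 h2 h3; set a := `|quot F A|; set b := `|quot G A|; set c := `|_ - _|; set s := \sum_(_ : _) _.
move=> ? ? ?; lra.
Qed.


Local Notation PT k := (prod_topology (fun _ : {set 'I_k} => R)).

Lemma vec_nbhs k (x : vec R k) e : 0 < e ->
  nbhs (x : PT k) (fun v : PT k => forall A, `|v A - x A| < e).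
Proof.
move=> he.
have := @filter_forall (PT k) {set 'I_k} (fun A (v : PT k) => `|v A - x A| < e) (nbhs (x : PT k)) _.
apply => A.
have h := @proj_continuous _ (fun _ : {set 'I_k} => R) A x.
have h2 : nbhs (x : PT k) (proj A @^-1` ball (x A) e) := h _ (nbhsx_ballx (x A) e he).
have sub : proj A @^-1` ball (x A) e `<=` (fun v : PT k => `|v A - x A| < e).
  move=> v; rewrite /proj /= -ball_normE /ball_ /= => hv.
  by rewrite distrC.
exact: (@filterS _ (nbhs (x : PT k)) _ _ _ sub h2).
Qed.

Lemma cluster_Q P : (0 < P)%N -> forall u : nat -> vec R P,
  (forall n, exists F : J n -> 'I_P, u n = quot F) ->
  exists2 x, L x & forall e, 0 < e -> forall N, exists2 n, (N <= n)%N & vdist_le (u n) x e.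
Proof.
move=> hP u hu.
have [N0 [B hB]] := quot_bound hP.
have cpt := @tychonoff _ (fun _ : {set 'I_P} => R) (fun _ => `[-B, B]%classic) (fun _ => @segment_compact R (-B) B).
pose u' : nat -> PT P := u.
have [|x [_ hx]] := cpt (u' @ \oo) _.
  exists N0 => // n /= hn A; have [F hF] := hu n; rewrite /u' hF.
  by rewrite /= in_itv /= -ler_norml; exact: hB.
have hcl : forall e, 0 < e -> forall N, exists2 n, (N <= n)%N & vdist_le (u n) x e.
  move=> e he N.
  have hF : (u' @ \oo) [set u' n | n in [set n | (N <= n)%N]].
    by exists N => // n /= hn; exists n.
  have hN := vec_nbhs x he.
  have [v [[n /= hn <-] hv]] := hx _ _ hF hN.
  by exists n => // A; apply: ltW; exact: hv.
exists x => // e he.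
have he2 : 0 < e / 2 by rewrite divr_gt0.
have [N hN] := cstep hP he2.
have [n0 hn0 hv] := hcl _ he2 N.
exists N => n hn.
have [F0 hF0] := hu n0.
have [G hG] := hN n0 n hn0 hn F0.
exists G; rewrite [e in vdist_le _ _ e](splitr e); apply: vdist_trans (vdist_sym hG) _.
by rewrite -hF0.
Qed.


Lemma abs_le_all (a : R) : (forall e, 0 < e -> `|a| <= e) -> a = 0.
Proof.
move=> h; apply/eqP; rewrite -normr_eq0; apply/negPn/negP => hne.
have hp : 0 < `|a| by rewrite lt_def hne normr_ge0.
have := h _ (divr_gt0 hp (ltr0Sn R 1)).
move: hp; set b := `|a|; move=> hp; lra.
Qed.

Lemma L_set0 k (x : vec R k) : L x -> x (finset.set0 : {set _}) = 0.
Proof.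
move=> hx; apply: abs_le_all => e he.
have [N hN] := hx e he; have [F hF] := hN N (leqnn N).
have := hF (finset.set0 : {set _}); rewrite quotE.
have -> : phi N (fun y => F y \in (finset.set0 : {set 'I_k})) = phi N set0.
  by congr (phi N _); apply/seteqP; split => y /=; rewrite inE.
by rewrite phi0 sub0r normrN.
Qed.

Lemma Lseq m : (0 < m)%N -> forall x : vec R m, L x ->
  exists F : forall n, J n -> 'I_m, forall e, 0 < e -> exists N, forall n, (N <= n)%N ->
    vdist_le (quot (F n)) x e.
Proof.
move=> hm x hx.
pose G0 n : {ffun J n -> 'I_m} := [ffun => Ordinal hm].
exists (fun n => fun j => [arg min_(G < G0 n) vd (quot G) x]%O j) => e he.
set c := #|{: {set 'I_m}}|.
have hc : (0 < c)%N by apply/card_gt0P; exists (finset.set0 : {set _}).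
have hc' : 0 < (c%:R : R) by rewrite ltr0n.
have [N hN] := hx (e / c%:R) (divr_gt0 he hc').
exists N => n hn; have [F' hF'] := hN n hn.
case: arg_minP => // G _ hmin.
apply: vdist_mono (vd_ge _ _).
have := hmin (finfun F') isT.
rewrite (quot_ext (F := finfun F') (G := F')); last by move=> y; rewrite ffunE.
move=> h; apply: le_trans h _.
apply: le_trans (vd_le hF') _.
have -> : #|{set 'I_m}| = c by []. 
have -> : e / c%:R *+ c = e / c%:R * c%:R by rewrite mulr_natr.
by rewrite divfK // gt_eqF.
Qed.

Lemma L_unif k : (0 < k)%N -> forall e, 0 < e -> exists N, forall x : vec R k, L x ->
  forall n, (N <= n)%N -> exists F : J n -> 'I_k, vdist_le (quot F) x e.
Proof.
move=> hk e he.
have he2 : 0 < e / 2 by rewrite divr_gt0.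
have [N hN] := cstep hk he2.
exists N => x hx n hn.
have [N1 hN1] := hx _ he2.
have [F1 hF1] := hN1 (maxn N N1) (leq_maxr _ _).
have [G hG] := hN (maxn N N1) n (leq_maxl _ _) hn F1.
exists G; rewrite [e in vdist_le _ _ e](splitr e).
exact: vdist_trans (vdist_sym hG) hF1.
Qed.

Lemma near_L k : (0 < k)%N -> forall e, 0 < e -> exists N, forall n, (N <= n)%N ->
  forall F : J n -> 'I_k, exists2 x, L x & vdist_le (quot F) x e.
Proof.
move=> hk e he.
have he2 : 0 < e / 2 by rewrite divr_gt0.
have [N hN] := cstep hk he2.
exists N => n hn F.
have H : forall n', exists G : J n' -> 'I_k, (N <= n')%N -> vdist_le (quot F) (quot G) (e / 2).
  move=> n'; case: (leqP N n') => hn'.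
    by have [G hG] := hN n n' hn hn' F; exists G.
  by exists (fun _ => Ordinal hk).
pose G n' := proj1_sig (cid (H n')).
have hG n' : (N <= n')%N -> vdist_le (quot F) (quot (G n')) (e / 2) := proj2_sig (cid (H n')).
have [|x hx hcl] := @cluster_Q k hk (fun n' => quot (G n')).
  by move=> n'; exists (G n').
exists x => //.
have [n' hn' hv] := hcl _ he2 N.
rewrite [e in vdist_le _ _ e](splitr e).
exact: vdist_trans (hG n' hn') hv.
Qed.

Lemma L_nonempty k : (0 < k)%N -> exists x : vec R k, L x.
Proof.
move=> hk; have [|x hx _] := @cluster_Q k hk (fun n => quot (fun _ : J n => Ordinal hk)).
  by move=> n; eexists.
by exists x.
Qed.

Lemma joint m M k (hm : (0 < m)%N) (hk : (0 < k)%N) (hM : (0 < M)%N)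
  (pi : 'I_M -> 'I_m) (h : 'I_M -> 'I_k) (c : 'I_m -> 'I_k -> 'I_M) :
  (forall a b, pi (c a b) = a) -> (forall a b, h (c a b) = b) ->
  forall (chi : vec R m) (w : vec R k), L chi -> L w ->
  exists x : vec R M, [/\ L x, Qmap pi x = chi & Qmap h x = w].
Proof.
move=> hpi hh chi w hchi hw.
have [F hF] := Lseq hm hchi.
have [G hG] := Lseq hk hw.
pose E n (j : J n) := c (F n j) (G n j).
have [|x hx hcl] := @cluster_Q M hM (fun n => quot (E n)).
  by move=> n; exists (E n).
exists x; split => //.
- apply: vdist_eq => e he.
  have he2 : 0 < e / 2 by rewrite divr_gt0.
  have [N hN] := hF _ he2.
  have [n hn hv] := hcl _ he2 N.
  have := Qmap_vdist pi (vdist_sym hv).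
  rewrite -quot_comp (quot_ext (G := F n)); last by move=> j; rewrite /= hpi.
  move=> h1; rewrite [e in vdist_le _ _ e](splitr e).
  exact: vdist_trans h1 (hN n hn).
- apply: vdist_eq => e he.
  have he2 : 0 < e / 2 by rewrite divr_gt0.
  have [N hN] := hG _ he2.
  have [n hn hv] := hcl _ he2 N.
  have := Qmap_vdist h (vdist_sym hv).
  rewrite -quot_comp (quot_ext (G := G n)); last by move=> j; rewrite /= hh.
  move=> h1; rewrite [e in vdist_le _ _ e](splitr e).
  exact: vdist_trans h1 (hN n hn).
Qed.


Definition modmap d d' (i : 'I_(2 ^ d')) : 'I_(2 ^ d) := Ordinal (ltn_pmod i (expn_gt0 2 d)).

Lemma Qmap_ext m k (f g : 'I_m -> 'I_k) (v : vec R m) : f =1 g -> Qmap f v = Qmap g v.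
Proof. by move=> h; apply/funext => A; rewrite /Qmap; congr (v _); apply/setP => i; rewrite !inE h. Qed.

Lemma Qmap_id m (v : vec R m) : Qmap id v = v.
Proof. by apply/funext => A; rewrite /Qmap; congr (v _); apply/setP => i; rewrite !inE. Qed.

Lemma stepL d k (hk : (0 < k)%N) (chi : vec R (2 ^ d)) (w : vec R k) : L chi -> L w ->
  exists x : vec R (2 ^ (d + k)), [/\ L x, Qmap (@modmap d (d + k)) x = chi &
     exists h : 'I_(2 ^ (d + k)) -> 'I_k, Qmap h x = w].
Proof.
move=> hchi hw.
have hp : (0 < 2 ^ d)%N := expn_gt0 2 d.
have hcb : forall (a : 'I_(2 ^ d)) (b : 'I_k), (a + 2 ^ d * b < 2 ^ (d + k))%N.
  move=> a b; have ha := ltn_ord a; have hb := ltn_ord b.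
  have hk2 : (k < 2 ^ k)%N by apply: ltn_expl.
  rewrite expnD; move: ha hb hk2; set p := (2 ^ d)%N; set q := (2 ^ k)%N; move=> ha hb hk2.
  have : (p * b.+1 <= p * q)%N by rewrite leq_mul2l; apply/orP; right; lia.
  lia.
pose c (a : 'I_(2 ^ d)) (b : 'I_k) : 'I_(2 ^ (d + k)) := Ordinal (hcb a b).
pose h (i : 'I_(2 ^ (d + k))) : 'I_k := Ordinal (ltn_pmod (i %/ 2 ^ d) hk).
have [||x [hx h1 h2]] := @joint _ _ _ (expn_gt0 2 d) hk (expn_gt0 2 (d + k)) (@modmap d (d + k)) h c _ _ chi w hchi hw.
- move=> a b; apply: val_inj => /=.
  by rewrite mulnC addnC modnMDl modn_small.
- move=> a b; apply: val_inj => /=.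
  by rewrite mulnC addnC divnMDl // divn_small // addn0 modn_small.
by exists x; split => //; exists h.
Qed.


Definition tgtP k r n i (x : vec R k) : Prop :=
  [/\ (0 < k)%N, L x & exists F : {ffun J n -> 'I_k}, pickle F = i /\ vdist_le (quot F) x (r.+1%:R^-1)].

Definition tgt (j : nat) : option {k : nat & vec R k} :=
  match pickle_inv j with
  | Some t => let: (k, r, n, i) := t in
     match pselect (exists x : vec R k, tgtP r n i x) with
     | left H => Some (existT _ k (proj1_sig (cid H)))
     | right _ => None
     end
  | None => None
  end.

Lemma tgt_spec j p : tgt j = Some p -> exists r n i,
  pickle_inv j = Some (projT1 p, r, n, i) /\ tgtP r n i (projT2 p).
Proof.
rewrite /tgt; case: (pickle_inv j) => [[[[k r] n] i]|] //=.
case: pselect => // H [<-] /=; exists r, n, i; split => //.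
exact: proj2_sig (cid H).
Qed.

Lemma tgt_some k r n i (x : vec R k) : tgtP r n i x -> exists p, tgt (pickle (k, r, n, i)) = Some p.
Proof.
move=> hx; rewrite /tgt pickleK_inv; case: pselect => H; first by eexists.
by exfalso; apply: H; exists x.
Qed.

Definition St := {d : nat & vec R (2 ^ d)}.

Definition Step (j : nat) (a b : St) : Prop :=
  L (projT2 a) -> [/\ L (projT2 b), (projT1 a < projT1 b)%N,
    Qmap (@modmap (projT1 a) (projT1 b)) (projT2 b) = projT2 a &
    forall p, tgt j = Some p -> exists h : 'I_(2 ^ projT1 b) -> 'I_(projT1 p), Qmap h (projT2 b) = projT2 p].

Lemma step_ex j a : exists b, Step j a b.
Proof.
case: a => d chi.
have [hL|hL] := pselect (L chi); last by exists (existT _ d chi) => /hL.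
case E: (tgt j) => [p|].
  have [r [n [i [_ [hk hw _]]]]] := tgt_spec E.
  have [x [hx h1 h2]] := stepL hk hL hw.
  exists (existT _ (d + projT1 p) x) => _; split => //=.
  - by rewrite -{1}[d]addn0 ltn_add2l.
  - move=> p' E'; rewrite E in E'; injection E' as E'; subst p'; exact: h2.
have hw : L (Qmap (fun _ => (ord0 : 'I_1)) chi) by apply: LQmap.
have [x [hx h1 h2]] := stepL (ltn0Sn 0) hL hw.
exists (existT _ (d + 1)%N x) => _; split => //=.
- by rewrite addn1.
- by move=> p'; rewrite E.
Qed.

Lemma chi0_ex : exists x : vec R (2 ^ 0), L x.
Proof. exact: L_nonempty. Qed.

Definition a0 : St := existT _ 0 (proj1_sig (cid chi0_ex)).

Fixpoint seqS j : St := match j with 0 => a0 | j'.+1 => proj1_sig (cid (step_ex j' (seqS j'))) end.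

Lemma seqS_step j : Step j (seqS j) (seqS j.+1).
Proof. exact: proj2_sig (cid (step_ex j (seqS j))). Qed.

Definition dd j := projT1 (seqS j).
Definition chi j : vec R (2 ^ dd j) := projT2 (seqS j).
Arguments chi : clear implicits.

Lemma Lchi j : L (chi j).
Proof.
elim: j => [|j IH]; first exact: proj2_sig (cid chi0_ex).
by have [] := seqS_step IH.
Qed.

Lemma dd_lt j : (dd j < dd j.+1)%N.
Proof. by have [] := seqS_step (Lchi j). Qed.

Lemma dd_mono i j : (i <= j)%N -> (dd i <= dd j)%N.
Proof.
move=> /subnK <-; elim: (j - i)%N => [|n IH] //.
by rewrite addSn; apply: leq_trans IH (ltnW (dd_lt _)).
Qed.

Lemma dd_ge j : (j <= dd j)%N.
Proof. by elim: j => [|j IH] //; apply: leq_ltn_trans IH (dd_lt j). Qed.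

Lemma modmapC a b c (i : 'I_(2 ^ c)) : (a <= b)%N ->
  @modmap a b (@modmap b c i) = @modmap a c i.
Proof.
move=> hab; apply: val_inj => /=.
by rewrite (@modn_dvdm (2 ^ b)%N) // dvdn_exp2l.
Qed.

Lemma chi_cons i j : (i <= j)%N -> Qmap (@modmap (dd i) (dd j)) (chi j) = chi i.
Proof.
move=> /subnK <-; elim: (j - i)%N => [|n IH].
  rewrite add0n -[RHS]Qmap_id; apply: Qmap_ext => r; apply: val_inj => /=.
  by rewrite modn_small.
have h : Qmap (@modmap (dd (n + i)) (dd (n + i).+1)) (chi (n + i).+1) = chi (n + i).
  by have [] := seqS_step (Lchi (n + i)).

rewrite addSn -IH -[in RHS]h QmapC; apply: Qmap_ext => r /=.
by rewrite modmapC // dd_mono // leq_addl.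
Qed.

Lemma chi_hit j p : tgt j = Some p -> exists h : 'I_(2 ^ dd j.+1) -> 'I_(projT1 p), Qmap h (chi j.+1) = projT2 p.
Proof. by have [_ _ _ h] := seqS_step (Lchi j); apply: h. Qed.


Lemma pd_mod d d' x : (d <= d')%N -> @modmap d d' (pd d' x) = pd d x.
Proof. by move=> h; apply: val_inj => /=; rewrite pdn_mod. Qed.

Definition lift i j (T : {set 'I_(2 ^ dd i)}) : {set 'I_(2 ^ dd j)} :=
  finset (fun r => @modmap (dd i) (dd j) r \in T).

Lemma cyl_lift i j (T : {set 'I_(2 ^ dd i)}) : (i <= j)%N -> cyl T = cyl (lift j T).
Proof.
move=> hij; apply/seteqP; split => x; rewrite /cyl /= inE pd_mod //; exact: dd_mono.
Qed.

Lemma cyl_inj D (T1 T2 : {set 'I_(2 ^ D)}) : cyl T1 = cyl T2 -> T1 = T2.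
Proof.
move=> E; apply/setP => r.
have [x hx] := pdn_surj (ltn_ord r).
have -> : r = pd D x by apply: val_inj.
have := congr1 (fun S => S x) E; rewrite /cyl /= => E'.
by apply/idP/idP => h; [rewrite -E' | rewrite E'].
Qed.

Lemma chi_lift i j (T : {set 'I_(2 ^ dd i)}) : (i <= j)%N -> chi j (lift j T) = chi i T.
Proof. by move=> hij; rewrite -(chi_cons hij). Qed.

Definition psi (S : set cantor_space) : R :=
  match pselect (exists p : {j : nat & {set 'I_(2 ^ dd j)}}, S = cyl (projT2 p)) with
  | left H => chi (projT1 (proj1_sig (cid H))) (projT2 (proj1_sig (cid H)))
  | right _ => 0
  end.

Lemma psi_cyl j (T : {set 'I_(2 ^ dd j)}) : psi (cyl T) = chi j T.
Proof.
rewrite /psi; case: pselect => [H|H]; last by exfalso; apply: H; exists (existT _ j T).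
case: (cid H) => [[i T'] /= hp].
have hi : (i <= maxn i j)%N := leq_maxl _ _.
have hj : (j <= maxn i j)%N := leq_maxr _ _.
rewrite -(chi_lift T' hi) -(chi_lift T hj); congr (chi _ _).
apply: cyl_inj; rewrite -cyl_lift // -cyl_lift //.
Qed.

Lemma psi0 : psi set0 = 0.
Proof.
have -> : set0 = cyl (finset.set0 : {set 'I_(2 ^ dd 0)}).
  by apply/seteqP; split => x //=; rewrite /cyl /= inE.
by rewrite psi_cyl; apply: L_set0; exact: Lchi.
Qed.


Lemma Qpsi_sub k v : @Qk R cantor_space (@clopen cantor_space) psi k v ->
  exists j (f : 'I_(2 ^ dd j) -> 'I_k), v = Qmap f (chi j).
Proof.
move=> [F [hF ->]].
have [D hD] := unif_depth (fun i => proj1 (hF i)).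
have hs (r : 'I_(2 ^ dd D)) : exists x, pdn (dd D) x = r := pdn_surj (ltn_ord r).
pose s r := proj1_sig (cid (hs r)).
pose f r := F (s r).
have hFf x : F x = f (pd (dd D) x).
  rewrite /f /s; case: (cid _) => y /= hy.
  symmetry; apply: hD => i hi.
  exact: (pdn_inj hy (leq_trans hi (dd_ge D))).
exists D, f; apply/funext => A.
rewrite /quotient_of /Qmap.
have -> : F @^-1` [set i | i \in A] = cyl (finset (fun r => f r \in A)).
  by apply/seteqP; split => x; rewrite /cyl /= inE hFf.
exact: psi_cyl.
Qed.

Lemma Qpsi_sup k j (f : 'I_(2 ^ dd j) -> 'I_k) :
  @Qk R cantor_space (@clopen cantor_space) psi k (Qmap f (chi j)).
Proof.
exists (fun x => f (pd (dd j) x)); split.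
  move=> i.
  have -> : (fun x => f (pd (dd j) x)) @^-1` [set i] = cyl (finset (fun r => f r == i)).
    by apply/seteqP; split => x; rewrite /cyl /= inE => /eqP.
  exact: cyl_clopen.
apply/funext => A; rewrite /quotient_of /Qmap.
have -> : (fun x => f (pd (dd j) x)) @^-1` [set i | i \in A] = cyl (finset (fun r => f r \in A)).
  by apply/seteqP; split => x; rewrite /cyl /= inE.
by rewrite psi_cyl.
Qed.

Lemma small_inv (e : R) : 0 < e -> exists r : nat, (r.+1%:R : R)^-1 <= e.
Proof.
move=> he; exists (Num.Def.trunc e^-1).
have ht := truncnS_gt e^-1.
have hq : 0 < ((Num.Def.trunc e^-1).+1%:R : R) by rewrite ltr0Sn.
rewrite -[e in _ <= e]invrK lef_pV2 ?posrE ?invr_gt0 //; exact: ltW.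
Qed.

Lemma dense k (hk : (0 < k)%N) (y : vec R k) : L y -> forall e, 0 < e ->
  exists j (f : 'I_(2 ^ dd j) -> 'I_k), vdist_le (Qmap f (chi j)) y e.
Proof.
move=> hy e he.
have he2 : 0 < e / 2 by rewrite divr_gt0.
have [r hr] := small_inv he2.
have heps : 0 < (r.+1%:R : R)^-1 by rewrite invr_gt0 ltr0Sn.
have [N1 hN1] := near_L hk heps.
have [N2 hN2] := hy _ he2.
have [F0 hF0] := hN2 (maxn N1 N2) (leq_maxr _ _).
have [x hx hFx] := hN1 (maxn N1 N2) (leq_maxl _ _) F0.
pose Fn : {ffun J (maxn N1 N2) -> 'I_k} := finfun F0.
have hqFn : quot Fn = quot F0 by apply: quot_ext => z; rewrite ffunE.
have htP : tgtP r (maxn N1 N2) (pickle Fn) x.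
  by split => //; exists Fn; rewrite hqFn.
have [p hp] := tgt_some htP.
have [r' [n' [i' [hpi htp]]]] := tgt_spec hp.
rewrite pickleK_inv in hpi.
case: p hp hpi htp => k' x' /= hp hpi htp.
case: hpi => ek er en ei; subst k' r' n' i'.
case: htp => _ _ [F' [hF'p hF'd]].
have eF : F' = Fn := pcan_inj pickleK_inv hF'p.
subst F'.
have [h hh] := chi_hit hp.
exists (pickle (k, r, maxn N1 N2, pickle Fn)).+1, h; rewrite hh /=.
apply: vdist_mono (vdist_trans (vdist_sym hF'd) _); last by rewrite hqFn; exact: hF0.
by rewrite [e in _ <= e](splitr e) lerD2r.
Qed.

Lemma main_result : exists psi : set cantor_space -> R,
  is_setfunction psi /\ quotient_converges_to phi (@clopen cantor_space) psi.
Proof.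
exists psi; split; first exact: psi0.
move=> k hk e he.
have he2 : 0 < e / 2 by rewrite divr_gt0.
have [Na hNa] := near_L hk he2.
have [Nb hNb] := L_unif hk he.
exists (maxn Na Nb) => n hn; split.
- move=> v /QkP [F ->].
  have [x hx hFx] := hNa n (leq_trans (leq_maxl _ _) hn) F.
  have [j [f hf]] := dense hk hx he2.
  exists (Qmap f (chi j)); first exact: Qpsi_sup.
  rewrite [e in vdist_le _ _ e](splitr e); exact: vdist_trans hFx (vdist_sym hf).
- move=> w hw; have [j [f ->]] := Qpsi_sub hw.
  have [F hF] := hNb _ (LQmap f (Lchi j)) n (leq_trans (leq_maxr _ _) hn).
  by exists (quot F) => //; apply/QkP; exists F.
Qed.

End Main.

Theorem corollary3p3 (R : realType) (J : nat -> finType)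
  (phi : forall n, set (J n) -> R) :
  (forall n, is_setfunction (phi n)) ->
  quotient_convergent phi ->
  exists psi : set cantor_space -> R,
    is_setfunction psi /\
    quotient_converges_to phi (@clopen cantor_space) psi.
Proof. by move=> h1 h2; apply: main_result. Qed.
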